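(* Let $m=O(1)$ be fixed. For the rectangular grid graph $G_{m,n}=P_m\times P_n$ and the cylindrical grid graph $C_{m,n}=P_m\times C_n$, the fraction of balanced $k$-partitions $Z_{\mu^{\mathrm{balanced}}_k}/Z_{\mu^*_k}$ is lower bounded by $\Omega\!\left(\frac{1}{n^{k-1}\Theta(1)^k}\right)$ and $\Omega\!\left(\frac{1}{n^{k}\Theta(1)^k}\right)$, respectively.
   Context: $P_n$ is the path on $n$ vertices, $C_n$ the cycle on $n$ vertices, and $G\times H$ the Cartesian product graph (vertices $(u,v)$, edges joining $(u,v),(u',v)$ for $uu'\in E(G)$ and $(u,v),(u,v')$ for $vv'\in E(H)$). For a graph $G$ and $k$, the spanning tree distribution assigns to a partition $(P_1,\dots,P_k)$ of $V(G)$ into $k$ parts the weight $\mu^*_k(P_1,\dots,P_k)=\prod_{i=1}^kT(P_i)$, where $T(P_i)$ is the number of spanning trees of $G[P_i]$; $Z_{\mu^*_k}$ is the sum of these weights over all partitions. $Z_{\mu^{\mathrm{balanced}}_k}$ is the same sum restricted to balanced partitions, i.e. those with $|P_1|=\dots=|P_k|$. Asymptotics are as $n\to\infty$, with constants depending on $m$. *)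

(* Defs.v *)
From mathcomp Require Import all_boot all_order all_algebra.
Set Implicit Arguments. Unset Strict Implicit. Unset Printing Implicit Defensive.
Import Order.TTheory GRing.Theory Num.Theory.

Definition path_adj (n : nat) : rel 'I_n :=
  fun i j => (i.+1 == j :> nat) || (j.+1 == i :> nat).

Definition cycle_adj (n : nat) : rel 'I_n :=
  fun i j => (i != j) && (((i.+1 %% n) == j :> nat) || ((j.+1 %% n) == i :> nat)).

Arguments path_adj n : clear implicits.
Arguments cycle_adj n : clear implicits.

Definition cart_adj (A B : finType) (G : rel A) (H : rel B) : rel (A * B) :=
  fun x y => ((x.1 == y.1) && H x.2 y.2) || ((x.2 == y.2) && G x.1 y.1).

Definition grid_graph (m n : nat) : rel ('I_m * 'I_n) :=
  cart_adj (path_adj m) (path_adj n).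
Definition cyl_graph (m n : nat) : rel ('I_m * 'I_n) :=
  cart_adj (path_adj m) (cycle_adj n).
Arguments grid_graph m n : clear implicits.
Arguments cyl_graph m n : clear implicits.

Section SpanningTrees.
Variable V : finType.
Variable G : rel V.

Definition induced_edge (P : {set V}) (e : {set V}) : bool :=
  [exists u, exists v,
     [&& e == [set u; v], G u v, u \in P & v \in P]].

Definition Fconnect (F : {set {set V}}) : rel V :=
  connect (fun a b => [set a; b] \in F).

(* F is (the edge set of) a spanning tree of G[P]: F consists of edges of
   G[P], the graph (P, F) is connected, and it is acyclic (every edge of F
   is a bridge of (P, F)). *)
Definition spanning_tree (P : {set V}) (F : {set {set V}}) : bool :=
  [&& [forall e in F, induced_edge P e],
      [forall x in P, forall y in P, Fconnect F x y] &
      [forall u, forall v,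
         ([set u; v] \in F) ==> ~~ Fconnect (F :\ [set u; v]) u v]].

Definition num_spanning_trees (P : {set V}) : nat :=
  #|[set F : {set {set V}} | spanning_tree P F]|.

(* k-partitions (P_1, ..., P_k) of V into nonempty parts, encoded by the
   labelling f : V -> 'I_k with P_i = f^{-1}(i). *)
Definition part (k : nat) (f : {ffun V -> 'I_k}) (i : 'I_k) : {set V} :=
  [set x | f x == i].

Definition is_kpartition (k : nat) (f : {ffun V -> 'I_k}) : bool :=
  [forall i, part f i != set0].

Definition is_balanced (k : nat) (f : {ffun V -> 'I_k}) : bool :=
  [forall i, forall j, #|part f i| == #|part f j|].

Definition tree_weight (k : nat) (f : {ffun V -> 'I_k}) : nat :=
  \prod_(i < k) num_spanning_trees (part f i).

Definition Z_tree (k : nat) : nat :=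
  \sum_(f : {ffun V -> 'I_k} | is_kpartition f) tree_weight f.

Definition Z_balanced (k : nat) : nat :=
  \sum_(f : {ffun V -> 'I_k} | is_kpartition f && is_balanced f) tree_weight f.

End SpanningTrees.

Definition balanced_fraction (V : finType) (G : rel V) (k : nat) : rat :=
  ((Z_balanced G k)%:R / (Z_tree G k)%:R)%R.

(* Main.v *)
Require Import Defs.
From mathcomp Require Import all_boot all_order all_algebra.
From mathcomp Require Import zify ring.
Import Order.TTheory GRing.Theory Num.Theory.
Set Implicit Arguments. Unset Strict Implicit. Unset Printing Implicit Defensive.

Section GenGraph.
Variable V : finType.
Implicit Types F B U T : {set {set V}}.

Definition adjF F : rel V := fun a b => [set a; b] \in F.

Lemma set2C (a b : V) : [set a; b] = [set b; a].
Proof. by rewrite setUC. Qed.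

Lemma set2_eq (a b u v : V) : [set a; b] = [set u; v] ->
  (a = u /\ b = v) \/ (a = v /\ b = u).
Proof.
move=> E.
have ha : a \in [set u; v] by rewrite -E set21.
have hb : b \in [set u; v] by rewrite -E set22.
have hu : u \in [set a; b] by rewrite E set21.
have hv : v \in [set a; b] by rewrite E set22.
case/set2P: ha => ea; case/set2P: hb => eb; subst; auto.
- case/set2P: hv => ev; subst; auto.
- case/set2P: hu => eu; subst; auto.
Qed.

Lemma adjF_sym F : symmetric (adjF F).
Proof. by move=> a b; rewrite /adjF set2C. Qed.

Lemma Fsym F : connect_sym (adjF F).
Proof. exact: sym_connect_sym (adjF_sym F). Qed.

Lemma FconnectE F : Fconnect F = connect (adjF F).
Proof. by []. Qed.

Lemma Fconnect_sym F x y : Fconnect F x y = Fconnect F y x.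
Proof. exact: Fsym. Qed.

Lemma Fconnect_trans F x y z : Fconnect F x y -> Fconnect F y z -> Fconnect F x z.
Proof. exact: connect_trans. Qed.

Lemma Fconnect1 F x y : [set x; y] \in F -> Fconnect F x y.
Proof. by move=> h; apply: connect1. Qed.

Lemma Fconnect0 F x : Fconnect F x x.
Proof. exact: connect0. Qed.

Lemma Fconnect_sub F F' x y :
  (forall a b, [set a; b] \in F -> Fconnect F' a b) ->
  Fconnect F x y -> Fconnect F' x y.
Proof. by move=> h; apply: connect_sub => a b /h. Qed.

Lemma Fconnect_subset F F' x y : F \subset F' -> Fconnect F x y -> Fconnect F' x y.
Proof. by move=> /subsetP h; apply: Fconnect_sub => a b /h; apply: Fconnect1. Qed.

Lemma connect_fwd (e : rel V) (P : V -> Prop) x y :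
  (forall a b, P a -> e a b -> P b) -> P x -> connect e x y -> P y.
Proof.
move=> st Px /connectP[p pp ->]; elim: p x Px pp => //= z p IH x Px /andP[exz pz].
exact: IH (st _ _ Px exz) pz.
Qed.

Lemma connect_add F u v x y : Fconnect ([set u; v] |: F) x y ->
  Fconnect F x y \/ (Fconnect F x u /\ Fconnect F v y) \/
  (Fconnect F x v /\ Fconnect F u y).
Proof.
move=> h0.
apply: (connect_fwd (P := fun z => Fconnect F x z \/ (Fconnect F x u /\ Fconnect F v z) \/
  (Fconnect F x v /\ Fconnect F u z))) h0; last by left; apply: Fconnect0.
move=> a b Pa; rewrite /= in_setU1 => /orP[/eqP/set2_eq [[? ?]|[? ?]] | abF]; subst.
- case: Pa => [h|[[h1 h2]|[h1 h2]]].
  + by right; left; split=> //; apply: Fconnect0.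
  + by left; apply: Fconnect_trans h1 _; rewrite Fconnect_sym.
  + by left.
- case: Pa => [h|[[h1 h2]|[h1 h2]]].
  + by right; right; split=> //; apply: Fconnect0.
  + by left.
  + by left; apply: Fconnect_trans h1 _; rewrite Fconnect_sym.
- have ab : Fconnect F a b by apply: Fconnect1.
  case: Pa => [h|[[h1 h2]|[h1 h2]]].
  + by left; apply: Fconnect_trans h ab.
  + by right; left; split=> //; apply: Fconnect_trans h2 ab.
  + by right; right; split=> //; apply: Fconnect_trans h2 ab.
Qed.

Definition acyclicP F := forall u v, [set u; v] \in F -> ~~ Fconnect (F :\ [set u; v]) u v.

Lemma acyclic_sub F F' : F' \subset F -> acyclicP F -> acyclicP F'.
Proof.
move=> sub ac u v h; apply: contra (ac u v (subsetP sub _ h)).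
by apply: Fconnect_subset; apply: setSD.
Qed.

Lemma acyclic_add F u v : acyclicP F -> ~~ Fconnect F u v -> acyclicP ([set u; v] |: F).
Proof.
move=> ac nc.
have e0F : [set u; v] \notin F by apply: contra nc; apply: Fconnect1.
move=> a b; rewrite in_setU1 => /orP[/eqP E | abF].
  rewrite E setU1K //.
  by case: (set2_eq E) => [[-> ->]|[-> ->]] //; rewrite Fconnect_sym.
have ne : [set a; b] != [set u; v] by apply: contraNneq e0F => <-.
have -> : ([set u; v] |: F) :\ [set a; b] = [set u; v] |: (F :\ [set a; b]).
  apply/setP=> z; rewrite !inE; case: (z =P [set u; v]) => [->|] //=.
  by rewrite eq_sym ne.
apply/negP => /connect_add [h|[[h1 h2]|[h1 h2]]].
- by move: (ac a b abF); rewrite h.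
- move/negP: nc; apply.
  have s : F :\ [set a; b] \subset F by apply: subD1set.
  have ua : Fconnect F u a by rewrite Fconnect_sym; apply: Fconnect_subset s h1.
  have vb : Fconnect F b v by rewrite Fconnect_sym; apply: Fconnect_subset s h2.
  exact: Fconnect_trans ua (Fconnect_trans (Fconnect1 abF) vb).
- move/negP: nc; apply.
  have s : F :\ [set a; b] \subset F by apply: subD1set.
  have ub : Fconnect F u b by apply: Fconnect_subset s h2.
  have av : Fconnect F a v by apply: Fconnect_subset s h1.
  have ba : Fconnect F b a by rewrite Fconnect_sym; apply: Fconnect1.
  exact: Fconnect_trans ub (Fconnect_trans ba av).
Qed.

Definition cls F x := [set y | Fconnect F x y].
Definition comp F := #|[set cls F x | x : V]|.

Lemma cls_eq F x y : Fconnect F x y -> cls F x = cls F y.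
Proof.
move=> h; apply/setP=> z; rewrite !inE; apply/idP/idP => h'.
  by apply: Fconnect_trans h'; rewrite Fconnect_sym.
exact: Fconnect_trans h h'.
Qed.

Definition hmap F' (C : {set V}) := \bigcup_(x in C) cls F' x.

Lemma hmap_cls F F' x :
  (forall a b, [set a; b] \in F -> Fconnect F' a b) ->
  hmap F' (cls F x) = cls F' x.
Proof.
move=> h; apply/setP=> z; apply/bigcupP/idP.
  case=> y; rewrite inE => xy; rewrite (cls_eq (Fconnect_sub h xy)) //.
by move=> zx; exists x; rewrite // inE Fconnect0.
Qed.

Lemma comp_image F F' :
  (forall a b, [set a; b] \in F -> Fconnect F' a b) ->
  [set cls F' x | x : V] = hmap F' @: [set cls F x | x : V].
Proof.
move=> h; rewrite -imset_comp; apply: eq_imset => x /=.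
by rewrite hmap_cls.
Qed.

Lemma comp_mono F F' :
  (forall a b, [set a; b] \in F -> Fconnect F' a b) -> comp F' <= comp F.
Proof. by move=> h; rewrite /comp (comp_image h) leq_imset_card. Qed.

Lemma comp_eq F F' : (forall x y, Fconnect F x y = Fconnect F' x y) -> comp F = comp F'.
Proof.
move=> h; apply/eqP; rewrite eqn_leq; apply/andP; split; apply: comp_mono.
- by move=> a b ab; rewrite h; apply: Fconnect1.
- by move=> a b ab; rewrite -h; apply: Fconnect1.
Qed.

Lemma sub_addF F e a b : [set a; b] \in F -> Fconnect (e |: F) a b.
Proof. by move=> h; apply: Fconnect1; rewrite in_setU1 h orbT. Qed.

Lemma comp_add F u v : comp F <= (comp ([set u; v] |: F)).+1.
Proof.
set F' := [set u; v] |: F.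
have h : forall a b, [set a; b] \in F -> Fconnect F' a b by move=> a b; apply: sub_addF.
rewrite /comp (comp_image h).
set A := [set cls F x | x : V].
have inj : {in A :\ cls F u &, injective (hmap F')}.
  move=> C1 C2; rewrite !inE => /andP[n1 /imsetP[x _ E1]] /andP[n2 /imsetP[y _ E2]]; subst C1 C2.
  rewrite !hmap_cls // => E.
  have : Fconnect F' x y.
    have : y \in cls F' y by rewrite inE Fconnect0.
    by rewrite -E inE.
  case/connect_add => [xy|[[xu _]|[_ uy]]].
  - exact: cls_eq.
  - by move: n1; rewrite (cls_eq xu) eqxx.
  - by move: n2; rewrite -(cls_eq uy) eqxx.
have := card_in_imset inj.
have s : hmap F' @: (A :\ cls F u) \subset hmap F' @: A by apply: imsetS; apply: subD1set.
have := subset_leq_card s.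
rewrite (cardsD1 (cls F u) A) => le1 E1.
have : cls F u \in A by apply/imsetP; exists u.
move=> ->; rewrite add1n ltnS; by rewrite -E1.
Qed.

Lemma comp_add_lt F u v : ~~ Fconnect F u v -> (comp ([set u; v] |: F)).+1 <= comp F.
Proof.
move=> nc.
set F' := [set u; v] |: F.
have h : forall a b, [set a; b] \in F -> Fconnect F' a b by move=> a b; apply: sub_addF.
rewrite /comp (comp_image h).
set A := [set cls F x | x : V].
rewrite ltn_neqAle leq_imset_card andbT.
apply/negP => /imset_injP inj.
have : cls F u = cls F v.
  apply: inj; try by apply/imsetP; eexists.
  rewrite !hmap_cls //; apply: cls_eq; apply: Fconnect1; exact: setU11.
move/setP/(_ v); rewrite !inE Fconnect0 => nuv.
by move: nc; rewrite nuv.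
Qed.

Lemma comp_add_any F e : comp F <= (comp (e |: F)).+1.
Proof.
case: (pickP (fun p : V * V => e == [set p.1; p.2])) => [[u v] /= /eqP ->|none].
  exact: comp_add.
apply: leqW; apply: comp_mono => a b; rewrite in_setU1 => /orP[/eqP E|ab].
  by move: (none (a, b)); rewrite /= E eqxx.
exact: Fconnect1.
Qed.

Lemma comp_addset F J : comp F <= comp (F :|: J) + #|J|.
Proof.
elim: {J}#|J| {-2}J (erefl #|J|) F => [|n IH] J cJ F.
  by move/eqP: cJ; rewrite cards_eq0 => /eqP ->; rewrite setU0 cards0 addn0.
have : J != set0 by rewrite -card_gt0 cJ.
case/set0Pn => e eJ.
have cJ' : #|J :\ e| = n by move: cJ; rewrite (cardsD1 e) eJ => [[]].
have := IH _ cJ' (e |: F).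
have -> : (e |: F) :|: (J :\ e) = F :|: J.
  by rewrite -setUA setUCA setD1K.
rewrite cJ' cJ addnS => h; apply: leq_trans (comp_add_any F e) _; by rewrite ltnS.
Qed.

Lemma extend_none F B : acyclicP F ->
  (forall u v, [set u; v] \in B -> Fconnect F u v) ->
  [/\ F \subset F, F \subset F :|: B, acyclicP F,
      (forall x y, Fconnect F x y = Fconnect (F :|: B) x y) &
      #|F :\: F| + comp (F :|: B) <= comp F].
Proof.
move=> acF h; split=> //; first exact: subsetUl.
- move=> x y; apply/idP/idP; first by apply: Fconnect_subset; apply: subsetUl.
  apply: Fconnect_sub => a b; rewrite inE => /orP[ab|ab]; last exact: h.
  exact: Fconnect1.
- rewrite setDv cards0 add0n; apply: comp_mono => a b ab.
  by apply: Fconnect1; rewrite inE ab.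
Qed.

Lemma extend F B : acyclicP F -> exists T,
  [/\ F \subset T, T \subset F :|: B, acyclicP T,
      (forall x y, Fconnect T x y = Fconnect (F :|: B) x y) &
      #|T :\: F| + comp (F :|: B) <= comp F].
Proof.
move: {2}#|B :\: F| (leqnn #|B :\: F|) => n; elim: n F => [|n IH] F hn acF;
 (case: (pickP (fun p : V * V => ([set p.1; p.2] \in B) && ~~ Fconnect F p.1 p.2))
   => [[u v] /= /andP[uvB nc] | none]; last first);
 try by exists F; apply: extend_none => // u v uvB; move: (none (u, v)); rewrite /= uvB => /negbFE.
- have : [set u; v] \in B :\: F by rewrite inE uvB andbT; apply: contra nc; apply: Fconnect1.
  by move: hn; rewrite leqn0 cards_eq0 => /eqP ->; rewrite inE.
set F' := [set u; v] |: F.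
have uvBF : [set u; v] \in B :\: F by rewrite inE uvB andbT; apply: contra nc; apply: Fconnect1.
have hn' : #|B :\: F'| <= n.
  have -> : B :\: F' = (B :\: F) :\ [set u; v].
    by apply/setP=> z; rewrite !inE; case: (z == [set u; v]).
  by move: hn; rewrite (cardsD1 [set u; v] (B :\: F)) uvBF.
have [T [FT TB acT cT cnt]] := IH F' hn' (acyclic_add acF nc).
have EB : F' :|: B = F :|: B.
  apply/setP=> z; rewrite !inE; case: (z =P [set u; v]) => //= ->.
  by rewrite uvB orbT.
rewrite EB in TB cT cnt.
exists T; split=> //.
- by apply: subset_trans FT; apply: subsetUr.
- have le1 : #|T :\: F| <= #|T :\: F'|.+1.
    have s : T :\: F \subset [set u; v] |: (T :\: F').
      by apply/subsetP=> z; rewrite !inE; case: (z == [set u; v]).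
    by apply: leq_trans (subset_leq_card s) _; rewrite cardsU1; case: (_ \notin _).
  have := comp_add_lt nc.
  rewrite -/F' => lt.
  apply: leq_trans (_ : #|T :\: F'|.+1 + comp (F :|: B) <= _).
    by rewrite leq_add2r.
  by rewrite addSn; apply: leq_trans lt; rewrite ltnS.
Qed.


End GenGraph.

Section Restrict.
Variable V : finType.
Implicit Types F U T : {set {set V}}.

Lemma set2_sub (a b : V) (P : {set V}) : ([set a; b] \subset P) = (a \in P) && (b \in P).
Proof. by rewrite subUset !sub1set. Qed.

Lemma connect_restrict F (P : {set V}) x y :
  (forall a b, [set a; b] \in F -> a \in P -> b \in P) -> x \in P ->
  Fconnect F x y -> Fconnect [set e in F | e \subset P] x y.
Proof.
move=> cl xP h.
have : y \in P /\ Fconnect [set e in F | e \subset P] x y.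
  apply: (connect_fwd (P := fun z => z \in P /\ Fconnect [set e in F | e \subset P] x z)) h;
    last by split=> //; apply: Fconnect0.
  move=> a b [aP xa] ab; have bP := cl a b ab aP; split=> //.
  apply: Fconnect_trans xa (Fconnect1 _); by rewrite inE ab set2_sub aP bP.
by case.
Qed.

Lemma stP (G : rel V) P F : reflect
  [/\ forall e, e \in F -> induced_edge G P e,
      forall x y, x \in P -> y \in P -> Fconnect F x y & acyclicP F]
  (spanning_tree G P F).
Proof.
apply: (iffP and3P) => [[/forall_inP h1 h2 /forallP h3] | [h1 h2 h3]]; split.
- exact: h1.
- by move=> x y xP yP; move/forall_inP: h2 => /(_ x xP) /forall_inP /(_ y yP).
- by move=> u v; move: (h3 u) => /forallP /(_ v) /implyP.
- by apply/forall_inP.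
- by apply/forall_inP => x xP; apply/forall_inP => y yP; apply: h2.
- by apply/forallP => u; apply/forallP => v; apply/implyP; apply: h3.
Qed.

Lemma induced_pair (G : rel V) (Gsym : symmetric G) P a b :
  induced_edge G P [set a; b] -> [/\ a \in P, b \in P & G a b].
Proof.
case/existsP=> u /existsP[v /and4P[/eqP E Guv uP vP]].
by case: (set2_eq E) => [[-> ->]|[-> ->]]; split=> //; rewrite Gsym.
Qed.

Lemma induced_ex (G : rel V) P e : induced_edge G P e ->
  exists a b, [/\ e = [set a; b], G a b, a \in P & b \in P].
Proof. by case/existsP=> u /existsP[v /and4P[/eqP E Guv uP vP]]; exists u, v. Qed.

End Restrict.

Section Lab.
Variable V : finType.
Variable k : nat.

Lemma ffact_le_fact n c : c <= n -> n ^_ c <= n`!.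
Proof.
move=> le; rewrite -(ffact_fact le); rewrite -{1}(muln1 (n ^_ c)).
by rewrite leq_mul2l fact_gt0 orbT.
Qed.

Definition LabSet (U : {set {set V}}) :=
  [set f : {ffun V -> 'I_k} | is_kpartition f &&
     [forall x, forall y, Fconnect U x y ==> (f x == f y)]].

Lemma Lab_bound U : comp U <= k -> #|LabSet U| <= k`!.
Proof.
move=> cU.
set e := adjF U.
have sym : connect_sym e by exact: Fsym.
set R := [set x | roots e x].
have RU : #|R| <= comp U.
  rewrite /comp -(card_in_imset (f := cls U) (D := R)); first by apply/subset_leq_card/subsetP => C /imsetP[x _ ->]; apply/imsetP; exists x.
  move=> x y; rewrite !inE => rx ry E.
  have xy : Fconnect U x y.
    have : y \in cls U y by rewrite inE Fconnect0.
    by rewrite -E inE.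
  by rewrite -(eqP rx) -(eqP ry); apply/(fingraph.rootP sym).
have Rk : #|R| <= k := leq_trans RU cU.
pose phi (f : {ffun V -> 'I_k}) := [ffun j : 'I_#|R| => f (enum_val j)].
have froot : forall f, f \in LabSet U -> forall x, f x = f (fingraph.root e x).
  move=> f; rewrite inE => /andP[_ /forallP hf] x.
  by move: (hf x) => /forallP /(_ (fingraph.root e x)) /implyP /(_ (fingraph.connect_root e x)) /eqP.
have Rroot : forall x, fingraph.root e x \in R by move=> x; rewrite inE fingraph.roots_root.
have inj : {in LabSet U &, injective phi}.
  move=> f1 f2 h1 h2 E; apply/ffunP => x.
  rewrite (froot _ h1) (froot _ h2).
  have := Rroot x => rx.
  rewrite -(enum_rankK_in rx rx).
  by move/ffunP: E => /(_ (enum_rank_in rx (fingraph.root e x))); rewrite !ffunE.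
rewrite -(card_in_imset inj).
apply: leq_trans (_ : #|[set h : {ffun 'I_#|R| -> 'I_k} | injectiveb h]| <= _); last first.
  by rewrite card_inj_ffuns card_ord; apply: ffact_le_fact; rewrite card_ord.
apply/subset_leq_card/subsetP => h /imsetP[f hf ->]; rewrite inE.
have sur : forall i : 'I_k, i \in codom (phi f).
  move=> i; have := hf; rewrite inE => /andP[/forallP /(_ i) /set0Pn [x]].
  rewrite inE => /eqP <- _.
  have rx := Rroot x.
  apply/codomP; exists (enum_rank_in rx (fingraph.root e x)).
  by rewrite ffunE (enum_rankK_in rx rx) (froot _ hf).
have : #|codom (phi f)| == #|'I_(#|R|)|.
  rewrite eqn_leq; apply/andP; split; first by apply: leq_image_card.
  rewrite card_ord; apply: leq_trans Rk _.
  by rewrite -{1}(card_ord k); apply/subset_leq_card/subsetP => i _; apply: sur.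
by move/image_injP => hinj; apply/injectiveP => a b; apply: hinj.
Qed.

End Lab.

Lemma card_pair_sum (A B : finType) (S : {set A * B}) :
  #|S| = \sum_(a : A) #|[set b | (a, b) \in S]|.
Proof.
rewrite -sum1_card.
rewrite (eq_bigr (fun a => \sum_(b | (a, b) \in S) 1)); last first.
  by move=> a _; rewrite -sum1_card; apply: eq_bigl => b; rewrite inE.
rewrite pair_big_dep /=; apply: eq_bigl => -[a b] /=; by [].
Qed.

Section Main.
Variable V : finType.
Variable G : rel V.
Hypothesis Gsym : symmetric G.
Variable k : nat.
Variable f0 : {ffun V -> 'I_k}.
Hypothesis f0kp : is_kpartition f0.
Definition Ein := [set e : {set V} | [exists x, exists y,
   [&& e == [set x; y], G x y & f0 x == f0 y]]].
Variables Near J : {set {set V}}.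
Hypothesis Hreg : forall x y, f0 x = f0 y -> Fconnect Ein x y.
Hypothesis Hcross : forall x y, G x y -> f0 x != f0 y ->
  [set x; y] \in Near /\ Fconnect ((Near :&: Ein) :|: J) x y.

Lemma Ein_ex e : e \in Ein -> exists a b, [/\ e = [set a; b], G a b & f0 a = f0 b].
Proof. by rewrite inE => /existsP[a /existsP[b /and3P[/eqP -> ? /eqP ?]]]; exists a, b. Qed.

Lemma Ein_pair a b : [set a; b] \in Ein -> G a b /\ f0 a = f0 b.
Proof.
case/Ein_ex => u [v [E Guv fuv]].
by case: (set2_eq E) => [[-> ->]|[-> ->]]; split=> //; rewrite Gsym.
Qed.

Lemma Ein_in a b : G a b -> f0 a = f0 b -> [set a; b] \in Ein.
Proof. by move=> Gab fab; rewrite inE; apply/existsP; exists a; apply/existsP; exists b; rewrite eqxx Gab fab eqxx. Qed.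

Lemma Ein_conn x y : Fconnect Ein x y -> f0 x = f0 y.
Proof.
move=> h.
apply: (connect_fwd (P := fun z => f0 x = f0 z)) h => // a b -> /Ein_pair[].
by [].
Qed.

Lemma part_cls x : part f0 (f0 x) = cls Ein x.
Proof.
apply/setP=> y; rewrite !inE; apply/idP/idP => [/eqP h|/Ein_conn ->//].
by apply: Hreg.
Qed.

Lemma Ein_comp : k <= comp Ein.
Proof.
have ne : forall i, exists x, f0 x = i.
  by move=> i; move/forallP: f0kp => /(_ i) /set0Pn[x]; rewrite inE => /eqP; exists x.
have inj : injective (part f0).
  move=> i j E; have [x hx] := ne i.
  have : x \in part f0 i by rewrite inE hx.
  by rewrite E inE hx => /eqP.
have <- : #|part f0 @: [set: 'I_k]| = k by rewrite card_imset // cardsT card_ord.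
apply/subset_leq_card/subsetP => P /imsetP[i _ ->]; have [x <-] := ne i.
by apply/imsetP; exists x => //; rewrite part_cls.
Qed.

Definition Ups (g : {ffun 'I_k -> {set {set V}}}) := \bigcup_(i < k) g i.

Section Input.
Variable f : {ffun V -> 'I_k}.
Variable g : {ffun 'I_k -> {set {set V}}}.
Hypothesis fkp : is_kpartition f.
Hypothesis gst : forall i, spanning_tree G (part f i) (g i).

Lemma g_ind i e : e \in g i -> induced_edge G (part f i) e.
Proof. by case/stP: (gst i) => h _ _; apply: h. Qed.

Lemma Ups_mem e : e \in Ups g -> exists i, e \in g i.
Proof. by case/bigcupP=> i _ h; exists i. Qed.

Lemma Ups_ex e : e \in Ups g -> exists a b, [/\ e = [set a; b], G a b & f a = f b].
Proof.
case/Ups_mem=> i /g_ind /induced_ex[a [b [-> Gab]]]; rewrite !inE => /eqP fa /eqP fb.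
by exists a, b; split=> //; rewrite fa fb.
Qed.

Lemma Ups_pair a b : [set a; b] \in Ups g -> G a b /\ f a = f b.
Proof.
case/Ups_mem=> i /g_ind /(induced_pair Gsym) [].
by rewrite !inE => /eqP -> /eqP ->.
Qed.

Lemma Ups_part i e : e \in Ups g -> e \subset part f i -> e \in g i.
Proof.
case/Ups_mem=> j ej; have := g_ind ej.
case/induced_ex=> a [b [E _ aj _]]; rewrite E set2_sub => /andP[ai _].
by move: aj ai; rewrite !inE => /eqP -> /eqP ji; rewrite -ji -E.
Qed.

Lemma Ups_f x y : Fconnect (Ups g) x y -> f x = f y.
Proof.
move=> h.
apply: (connect_fwd (P := fun z => f x = f z)) h => // a b fa /Ups_pair[_ fab].
by rewrite fa fab.
Qed.

Lemma Ups_span x y : f x = f y -> Fconnect (Ups g) x y.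
Proof.
move=> fxy; case/stP: (gst (f x)) => _ h _.
apply: (Fconnect_subset (F := g (f x))); first by apply: (bigcup_sup (f x)).
by apply: h; rewrite inE ?fxy.
Qed.

Lemma Ups_acyc : acyclicP (Ups g).
Proof.
move=> u v uvU; have [i ei] := Ups_mem uvU.
have := g_ind ei => /(induced_pair Gsym) [ui vi _].
case/stP: (gst i) => _ _ aci.
apply: contra (aci u v ei) => h.
have cl : forall a b, [set a; b] \in Ups g :\ [set u; v] -> a \in part f i -> b \in part f i.
  by move=> a b; rewrite in_setD1 !inE => /andP[_ /Ups_pair[_ ->]].
have := connect_restrict cl ui h.
apply: Fconnect_subset; apply/subsetP => e; rewrite !inE => /andP[/andP[ne eU] sub].
by rewrite ne; apply: Ups_part.
Qed.

Lemma Ups_comp : comp (Ups g) <= k.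
Proof.
apply: leq_trans (_ : #|part f @: [set: 'I_k]| <= _); last first.
  by apply: leq_trans (leq_imset_card _ _) _; rewrite cardsT card_ord.
apply/subset_leq_card/subsetP => C /imsetP[x _ ->]; apply/imsetP; exists (f x) => //.
apply/setP=> y; rewrite !inE; apply/idP/idP => [/Ups_f -> //| /eqP h].
by apply: Ups_span.
Qed.

Lemma g_rec : g = [ffun i => [set e in Ups g | e \subset part f i]].
Proof.
apply/ffunP => i; rewrite ffunE; apply/setP => e; rewrite inE.
apply/idP/idP => [ei|/andP[eU es]]; last exact: Ups_part.
apply/andP; split; first by apply/bigcupP; exists i.
by case/induced_ex: (g_ind ei) => a [b [-> _ ai bi]]; rewrite set2_sub ai bi.
Qed.

End Input.


Section Output.
Variable T : {set {set V}}.
Hypothesis TE : T \subset Ein.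
Hypothesis Tac : acyclicP T.
Hypothesis Tc : forall x y, Fconnect T x y = Fconnect Ein x y.

Definition gout := [ffun i => [set e in T | e \subset part f0 i]].

Lemma gout_st i : spanning_tree G (part f0 i) (gout i).
Proof.
apply/stP; split.
- move=> e; rewrite ffunE inE => /andP[eT es].
  case/Ein_ex: (subsetP TE _ eT) => a [b [E Gab _]].
  move: es; rewrite E set2_sub => /andP[ai bi].
  by apply/existsP; exists a; apply/existsP; exists b; rewrite eqxx Gab ai bi.
- move=> x y xi yi; rewrite ffunE.
  have cl : forall a b, [set a; b] \in T -> a \in part f0 i -> b \in part f0 i.
    by move=> a b /(subsetP TE) /Ein_pair [_ fab]; rewrite !inE fab.
  have fxy : f0 x = f0 y by move: xi yi; rewrite !inE => /eqP -> /eqP ->.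
  by apply: (connect_restrict cl xi); rewrite Tc; apply: Hreg.
- by apply: acyclic_sub Tac; rewrite ffunE; apply/subsetP => e; rewrite inE => /andP[].
Qed.

Lemma gout_Ups : Ups gout = T.
Proof.
apply/setP => e; apply/bigcupP/idP => [[i _]|eT]; first by rewrite ffunE inE => /andP[].
case/Ein_ex: (subsetP TE _ eT) => a [b [E Gab fab]].
exists (f0 a) => //; rewrite ffunE inE eT E set2_sub !inE fab !eqxx.
by [].
Qed.

End Output.

Lemma exist_out (f : {ffun V -> 'I_k}) (g : {ffun 'I_k -> {set {set V}}}) : is_kpartition f -> (forall i, spanning_tree G (part f i) (g i)) ->
  exists T : {set {set V}}, [/\ T \subset Ein, acyclicP T, (forall x y, Fconnect T x y = Fconnect Ein x y),
     Ups g :\: Near \subset T & #|(T :\: Near) :\: Ups g| <= #|J|].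
Proof.
move=> fkp gst.
set U := Ups g.
set S := U :&: Ein.
set B1 := Near :&: Ein.
have acS : acyclicP S by apply: acyclic_sub (Ups_acyc gst); apply: subsetIl.
have [T1 [ST1 T1S acT1 cT1 _]] := extend B1 acS.
have cmpT1 : comp T1 <= k + #|J|.
  rewrite (comp_eq cT1); apply: leq_trans (comp_addset _ J) _; rewrite leq_add2r.
  apply: leq_trans (Ups_comp gst); apply: comp_mono => a b abU.
  have [Gab _] := Ups_pair gst abU.
  case: (f0 a =P f0 b) => [fab|/eqP nfab].
    by apply: Fconnect1; rewrite !inE; have := Ein_in Gab fab; rewrite /S inE abU => ->.
  have [_ h] := Hcross Gab nfab.
  by apply: Fconnect_subset h; apply: setSU; apply: subsetUr.
have T1E : T1 \subset Ein.
  apply: subset_trans T1S _; apply/subUsetP; split; exact: subsetIr.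
have [T [T1T TT1 acT cT cnt]] := extend Ein acT1.
have EE : T1 :|: Ein = Ein by apply/setUidPr.
rewrite EE in TT1 cT cnt.
exists T; split=> //.
- apply/subsetP => e; rewrite inE => /andP[eN eU].
  case: (Ups_ex gst eU) => a [b [E Gab _]].
  case: (f0 a =P f0 b) => [fab|/eqP nfab]; last first.
    by have [h _] := Hcross Gab nfab; move: eN; rewrite E h.
  apply: (subsetP T1T); apply: (subsetP ST1); rewrite inE eU E.
  exact: Ein_in.
- have le1 : #|(T :\: Near) :\: U| <= #|T :\: T1|.
    apply/subset_leq_card/subsetP => e; rewrite !inE => /andP[eU /andP[eN eT]].
    rewrite eT andbT; apply/negP => /(subsetP T1S); rewrite !inE.
    by rewrite (negbTE eU) (negbTE eN).
  have := Ein_comp; move: cnt cmpT1; lia.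
Qed.

Definition Aset := [set p : {ffun V -> 'I_k} * {ffun 'I_k -> {set {set V}}} |
  is_kpartition p.1 && [forall i, spanning_tree G (part p.1 i) (p.2 i)]].
Definition Bset := [set g' : {ffun 'I_k -> {set {set V}}} |
  [forall i, spanning_tree G (part f0 i) (g' i)]].
Definition Rl (p : {ffun V -> 'I_k} * {ffun 'I_k -> {set {set V}}})
  (g' : {ffun 'I_k -> {set {set V}}}) :=
  (Ups p.2 :\: Near \subset Ups g') && (#|(Ups g' :\: Near) :\: Ups p.2| <= #|J|).
Definition Zset := [set Z : {set {set V}} | (Z \subset Ein) && (#|Z| <= #|J|)].

Lemma A_ex p : p \in Aset -> exists g', (g' \in Bset) && Rl p g'.
Proof.
rewrite inE => /andP[kp /forallP st].
have [T [TE acT cT sub cnt]] := exist_out kp st.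
exists (gout T); rewrite /Rl gout_Ups // sub cnt !andbT inE.
by apply/forallP => i; apply: gout_st.
Qed.

Lemma UpsB_Ein g' : g' \in Bset -> Ups g' \subset Ein.
Proof.
rewrite inE => /forallP st; apply/subsetP => e eU.
have [a [b [-> Gab fab]]] := Ups_ex st eU.
exact: Ein_in.
Qed.

Lemma fiber g' : g' \in Bset -> #|[set p in Aset | Rl p g']| <= 2 ^ #|Near| * #|Zset| * k`!.
Proof.
move=> gB.
set T' := Ups g'.
set Fib := [set p in Aset | Rl p g'].
pose Phi (p : {ffun V -> 'I_k} * {ffun 'I_k -> {set {set V}}}) :=
  ((Ups p.2 :&: Near, (T' :\: Near) :\: Ups p.2), p.1).
have Urec : forall p, p \in Fib -> Ups p.2 = (Ups p.2 :&: Near) :|: ((T' :\: Near) :\: ((T' :\: Near) :\: Ups p.2)).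
  move=> p; rewrite !inE => /andP[_ /andP[/subsetP sub _]].
  apply/setP => e; rewrite !inE; move: (sub e); rewrite !inE.
  by case: (e \in Ups p.2); case: (e \in Near); case: (e \in T') => //= ->.
have inj : {in Fib &, injective Phi}.
  move=> [f1 g1] [f2 g2] h1 h2 [E1 E2 E3]; subst f2.
  have := Urec _ h1; have := Urec _ h2; rewrite /= E1 E2 => <- EU.
  move: h1 h2; rewrite !inE /= => /andP[/andP[k1 /forallP s1] _] /andP[/andP[k2 /forallP s2] _].
  by rewrite (g_rec s1) (g_rec s2) EU.
rewrite -(card_in_imset inj) card_pair_sum.
set X := setX (powerset Near) Zset.
apply: leq_trans (_ : \sum_q1 (q1 \in X) * k`! <= _).
  apply: leq_sum => q1 _.
  set sl := [set f | (q1, f) \in Phi @: Fib].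
  case: (set_0Vmem sl) => [-> | [f fsl]]; first by rewrite cards0.
  move: (fsl); rewrite inE => /imsetP[p pF [E1 E2]].
  have q1X : q1 \in X.
    rewrite E1 inE /= powersetE subsetIr /= inE; move: pF; rewrite !inE => /andP[_ /andP[_ ->]].
    rewrite andbT; apply: subset_trans (UpsB_Ein gB); apply/subsetP => e.
    by rewrite !inE => /andP[_ /andP[_ ->]].
  rewrite q1X mul1n.
  have pA : p \in Aset by move: pF; rewrite inE => /andP[].
  move: (pA); rewrite inE => /andP[kp /forallP st].
  apply: leq_trans (Lab_bound (Ups_comp st)).
  apply/subset_leq_card/subsetP => f' f'sl.
  move: f'sl; rewrite inE => /imsetP[p' p'F [E1' E2']].
  have p'A : p' \in Aset by move: p'F; rewrite inE => /andP[].
  move: (p'A); rewrite inE => /andP[kp' /forallP st'].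
  have EU : Ups p'.2 = Ups p.2.
    have [ea ez] : (Ups p'.2 :&: Near = Ups p.2 :&: Near) /\
      ((T' :\: Near) :\: Ups p'.2 = (T' :\: Near) :\: Ups p.2) by move: E1'; rewrite E1 => -[].
    by rewrite (Urec _ p'F) ea ez -(Urec _ pF).
  rewrite inE E2' kp' /=; apply/forallP => x; apply/forallP => y; apply/implyP.
  by rewrite -EU => /(Ups_f st') ->.
rewrite -big_distrl /=.
have -> : \sum_q1 (q1 \in X : nat) = #|X|.
  by rewrite -sum1_card [RHS]big_mkcond /=; apply: eq_bigr => q _; case: (q \in X).
by rewrite cardsX card_powerset.
Qed.

Lemma main_count : #|Aset| <= 2 ^ #|Near| * #|Zset| * k`! * #|Bset|.
Proof.
rewrite mulnC -sum_nat_const.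
apply: leq_trans (_ : \sum_(g' in Bset) #|[set p in Aset | Rl p g']| <= _); last first.
  by apply: leq_sum => g' gB; apply: fiber.
rewrite -sum1_card.
apply: leq_trans (_ : \sum_(p in Aset) \sum_(g' in Bset) (Rl p g' : nat) <= _).
  apply: leq_sum => p pA; have [g' /andP[gB R]] := A_ex pA.
  by rewrite (bigD1 g') //= R.
rewrite exchange_big /=; apply: leq_sum => g' _.
rewrite -sum1_card big_mkcond /= [X in _ <= X]big_mkcond /=.
by apply: leq_sum => p _; rewrite !inE; case: (_ && _); case: (Rl p g').
Qed.

Lemma prod_bool (I : finType) (b : I -> bool) :
  \prod_(i : I) (b i : nat) = [forall i, b i].
Proof.
case: (boolP [forall i, b i]) => [/forallP h | /forallPn [i hi]].
  by rewrite big1 // => i _; rewrite h.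
by rewrite (bigD1 i) //= (negbTE hi).
Qed.

Lemma tw_card (H : rel V) (f : {ffun V -> 'I_k}) : tree_weight H f =
  #|[set g : {ffun 'I_k -> {set {set V}}} | [forall i, spanning_tree H (part f i) (g i)]]|.
Proof.
rewrite /tree_weight /num_spanning_trees.
rewrite (eq_bigr (fun i => \sum_(F : {set {set V}}) (spanning_tree H (part f i) F : nat))); last first.
  move=> i _; rewrite -sum1_card [LHS]big_mkcond /=; apply: eq_bigr => F _; rewrite inE.
  by case: (spanning_tree _ _ _).
rewrite bigA_distr_bigA /= -sum1_card [RHS]big_mkcond /=; apply: eq_bigr => g _.
by rewrite prod_bool inE; case: [forall i, _].
Qed.

Lemma Ztree_card : Z_tree G k = #|Aset|.
Proof.
rewrite /Z_tree card_pair_sum [LHS]big_mkcond /=; apply: eq_bigr => f _.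
rewrite tw_card; case: (boolP (is_kpartition f)) => kp.
  by apply: eq_card => g; rewrite !inE kp.
apply/eqP; rewrite eq_sym cards_eq0; apply/eqP/setP => g; rewrite !inE.
by rewrite (negbTE kp).
Qed.

Hypothesis f0bal : is_balanced f0.

Lemma Zbal_ge : #|Bset| <= Z_balanced G k.
Proof.
rewrite /Z_balanced (bigD1 f0) /=; last by rewrite f0kp f0bal.
by rewrite tw_card; apply: leq_addr.
Qed.

Lemma Bset_gt0 : 0 < #|Bset|.
Proof.
have ac0 : acyclicP (set0 : {set {set V}}) by move=> u v; rewrite inE.
have [T [_ T0 acT cT _]] := extend Ein ac0.
rewrite set0U in T0 cT.
apply/card_gt0P; exists (gout T); rewrite inE; apply/forallP => i.
exact: gout_st.
Qed.

Theorem abstract_bound :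
  Z_tree G k <= 2 ^ #|Near| * #|Zset| * k`! * Z_balanced G k /\ 0 < Z_balanced G k.
Proof.
split; last by apply: leq_trans Bset_gt0 Zbal_ge.
rewrite Ztree_card; apply: leq_trans main_count _.
by rewrite leq_mul2l Zbal_ge orbT.
Qed.

End Main.

Section Snake.
Variable V : finType.
Variable G : rel V.
Hypothesis Gsym : symmetric G.
Variables m k s : nat.
Hypothesis m_gt0 : 0 < m.
Hypothesis k_gt0 : 0 < k.
Hypothesis s_ge : 4 * m <= s.
Variable tau : V -> nat.
Variable sigma : nat -> V.
Hypothesis tauN : forall x, tau x < k * s.
Hypothesis tauK : forall x, sigma (tau x) = x.
Hypothesis sigmaK : forall j, j < k * s -> tau (sigma j) = j.
Hypothesis Gsnake : forall j, j.+1 < k * s -> G (sigma j) (sigma j.+1).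
Variable wrapok : bool.
Hypothesis Gclose : forall x y, G x y ->
  (tau x < tau y + 2 * m /\ tau y < tau x + 2 * m) \/
  (wrapok /\ ((tau x < m /\ k * s - m <= tau y) \/ (tau y < m /\ k * s - m <= tau x))).
Variable nb : V -> 'I_6 -> V.
Hypothesis Gnb : forall x y, G x y -> exists d, y = nb x d.

Definition ordk (i : nat) : 'I_k := Ordinal (ltn_pmod i k_gt0).
Definition f0 : {ffun V -> 'I_k} := [ffun x => ordk (tau x %/ s)].

Lemma s_gt0 : 0 < s. Proof. by apply: leq_trans s_ge; rewrite muln_gt0 m_gt0. Qed.

Lemma reg_lt x : tau x %/ s < k.
Proof. by rewrite ltn_divLR ?s_gt0 // mulnC. Qed.

Lemma f0E x : (f0 x : nat) = tau x %/ s.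
Proof. by rewrite ffunE /= modn_small // reg_lt. Qed.

Lemma f0_eq x y : (f0 x == f0 y) = (tau x %/ s == tau y %/ s).
Proof. by rewrite -val_eqE /= !f0E. Qed.

Lemma sigma_reg j : j < k * s -> (f0 (sigma j) : nat) = j %/ s.
Proof. by move=> h; rewrite f0E sigmaK. Qed.

Lemma sigma_path (F : {set {set V}}) a b : a <= b ->
  (forall t, a <= t -> t < b -> [set sigma t; sigma t.+1] \in F) ->
  Fconnect F (sigma a) (sigma b).
Proof.
move=> ab h; elim: b ab h => [|b IH] ab h.
  by move: ab; rewrite leqn0 => /eqP ->; apply: Fconnect0.
case: (leqP a b) => [ab'|ba].
  apply: Fconnect_trans (IH ab' _) (Fconnect1 (h b ab' (leqnn _))).
  by move=> t at1 tb; apply: h => //; apply: ltnW.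
have -> : a = b.+1 by lia.
exact: Fconnect0.
Qed.

Definition EinS := Ein G f0.

Lemma Hreg x y : f0 x = f0 y -> Fconnect EinS x y.
Proof.
move=> /eqP; rewrite f0_eq => /eqP e.
have main : forall a b, a <= b -> b < k * s -> a %/ s = b %/ s -> Fconnect EinS (sigma a) (sigma b).
  move=> a b ab bN eab; apply: sigma_path => // t at1 tb.
  apply: Ein_in; first by apply: Gsnake; lia.
  have tN : t < k * s by apply: ltn_trans tb bN.
  have t1N : t.+1 < k * s by apply: leq_ltn_trans tb bN.
  apply/val_inj; rewrite /= !sigma_reg //.
  have h1 : a %/ s <= t %/ s by apply: leq_div2r.
  have h2 : t.+1 %/ s <= b %/ s by apply: leq_div2r; apply: tb.
  have h3 : t %/ s <= t.+1 %/ s by apply: leq_div2r.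
  apply/eqP; rewrite eqn_leq h3 /=; apply: leq_trans h2 _; by rewrite -eab.
rewrite -(tauK x) -(tauK y).
case: (leqP (tau x) (tau y)) => h.
  by apply: main.
by rewrite Fconnect_sym; apply: main => //; lia.
Qed.
Ltac slia := repeat match goal with
  | H : context[divn _ _] |- _ => clear H
  | H : context[modn _ _] |- _ => clear H end; lia.

Lemma div_eqI t q : q * s <= t -> t < q * s + s -> t %/ s = q.
Proof.
move=> h1 h2; apply/eqP; rewrite eqn_leq; apply/andP; split.
  by rewrite -ltnS ltn_divLR ?s_gt0 // mulSn addnC.
by rewrite leq_divRL ?s_gt0.
Qed.

Definition nearb t := [exists i : 'I_k.+1, (i * s <= t + 2 * m) && (t < i * s + 2 * m)].
Definition NearV := [set x | nearb (tau x)].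
Definition NearS := (fun p : V * 'I_6 => [set p.1; nb p.1 p.2]) @: setX NearV setT.
Definition Jg := (fun i : 'I_k.-1 => [set sigma (i.+1 * s).-1; sigma (i.+1 * s)]) @: setT.
Definition JS := if wrapok then [set sigma 0; sigma (k * s).-1] |: Jg else Jg.
Definition QS := NearS :&: EinS.

Lemma nearI t i : i <= k -> i * s <= t + 2 * m -> t < i * s + 2 * m -> nearb t.
Proof.
by move=> ik h1 h2; apply/existsP; exists (Ordinal (ik : i < k.+1)); rewrite /= h1 h2.
Qed.

Lemma near_in x y : nearb (tau x) -> G x y -> [set x; y] \in NearS.
Proof.
move=> nx /Gnb [d ->]; apply/imsetP; exists (x, d) => //.
by rewrite inE /= inE nx inE.
Qed.

Lemma Qstep t : t.+1 < k * s -> nearb t -> t %/ s = t.+1 %/ s -> [set sigma t; sigma t.+1] \in QS.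
Proof.
move=> tN nt e; rewrite inE; apply/andP; split.
  by apply: near_in; [rewrite sigmaK // ltnW | apply: Gsnake].
apply: Ein_in; first by apply: Gsnake.
by apply/val_inj; rewrite /= !sigma_reg // ltnW.
Qed.

Lemma Qpath a b : a <= b -> b < k * s -> a %/ s = b %/ s ->
  (forall t, a <= t -> t <= b -> nearb t) -> Fconnect QS (sigma a) (sigma b).
Proof.
move=> ab bN eab hn; apply: sigma_path => // t at1 tb.
apply: Qstep; first by apply: leq_ltn_trans tb bN.
  by apply: hn => //; apply: ltnW.
have h1 : a %/ s <= t %/ s by apply: leq_div2r.
have h2 : t.+1 %/ s <= b %/ s by apply: leq_div2r; apply: tb.
have h3 : t %/ s <= t.+1 %/ s by apply: leq_div2r.
apply/eqP; rewrite eqn_leq h3 /=; apply: leq_trans h2 _; by rewrite -eab.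
Qed.

Lemma QS_sub (X : {set {set V}}) a b : Fconnect QS a b -> Fconnect (QS :|: X) a b.
Proof. by apply: Fconnect_subset; apply: subsetUl. Qed.

Lemma JS_in a b : [set a; b] \in JS -> Fconnect (QS :|: JS) a b.
Proof. by move=> h; apply: Fconnect1; rewrite inE h orbT. Qed.

Lemma cross_close x y : G x y -> tau x < tau y -> tau y < tau x + 2 * m ->
  tau x %/ s != tau y %/ s ->
  [set x; y] \in NearS /\ Fconnect (QS :|: JS) x y.
Proof.
move=> Gxy; move ex : (tau x) => tx; move ey : (tau y) => ty => lt1 lt2 ne.
have tyN : ty < k * s by rewrite -ey tauN.
move ei : (ty %/ s) => i.
have ik : i < k by rewrite -ei ltn_divLR ?s_gt0 // mulnC.
have bty : i * s <= ty by rewrite -ei leq_trunc_div.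
have tyb : ty < i * s + s by rewrite -ei {1}(divn_eq ty s) ltn_add2l ltn_pmod ?s_gt0.
have le1 : tx %/ s <= i by rewrite -ei; apply: leq_div2r; apply: ltnW.
have lt3 : tx %/ s < i by rewrite ltn_neqAle le1 -ei ne.
clear le1.
have txb : tx < i * s by rewrite -ltn_divLR ?s_gt0.
have i1 : 0 < i by slia.
split.
  by apply: near_in => //; rewrite ex; apply: (nearI (ltnW ik)); slia.
have ii : i.-1 * s + s = i * s by rewrite addnC -mulSn prednK.
have sg := s_ge.
have e1 : tx %/ s = (i * s).-1 %/ s.
  by rewrite (@div_eqI tx i.-1) ?(@div_eqI ((i * s).-1) i.-1) //; slia.
have e2 : (i * s) %/ s = ty %/ s by rewrite mulnK ?s_gt0.
have P1 : Fconnect QS x (sigma (i * s).-1).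
  rewrite -(tauK x) ex; apply: Qpath; [slia | slia | exact: e1 | ].
  move=> t h1 h2; apply: (nearI (ltnW ik)); slia.
have P2 : Fconnect QS (sigma (i * s)) y.
  rewrite -(tauK y) ey; apply: Qpath; [exact: bty | exact: tyN | exact: e2 | ].
  move=> t h1 h2; apply: (nearI (ltnW ik)); slia.
have J1 : [set sigma (i * s).-1; sigma (i * s)] \in JS.
  have : [set sigma (i * s).-1; sigma (i * s)] \in Jg.
    apply/imsetP.
    have ik1 : i.-1 < k.-1 by slia.
    exists (Ordinal ik1) => //=; by rewrite prednK.
  by rewrite /JS; case: wrapok => //; rewrite inE => ->; rewrite orbT.
apply: Fconnect_trans (QS_sub _ P1) _.
apply: Fconnect_trans (JS_in J1) _.
exact: QS_sub.
Qed.

Lemma cross_wrap x y : G x y -> wrapok -> tau x < m -> k * s - m <= tau y ->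
  [set x; y] \in NearS /\ Fconnect (QS :|: JS) x y.
Proof.
move=> Gxy wr; move ex : (tau x) => tx; move ey : (tau y) => ty => lt1 lt2.
have tyN : ty < k * s by rewrite -ey tauN.
have sg := s_ge.
have kk : k.-1 * s + s = k * s by rewrite addnC -mulSn prednK.
have k0 : 0 <= k by [].
split.
  apply: near_in => //; rewrite ex; apply: (@nearI _ 0) => //; slia.
have e0 : 0 %/ s = tx %/ s by rewrite div0n divn_small //; slia.
have ek : ty %/ s = (k * s).-1 %/ s.
  by rewrite (@div_eqI ty k.-1) ?(@div_eqI ((k * s).-1) k.-1) //; slia.
have P1 : Fconnect QS (sigma 0) x.
  rewrite -(tauK x) ex; apply: Qpath; [by [] | by slia | exact: e0 | ].
  move=> t h1 h2; apply: (@nearI _ 0) => //; slia.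
have P2 : Fconnect QS y (sigma (k * s).-1).
  rewrite -(tauK y) ey; apply: Qpath; [slia | slia | exact: ek | ].
  move=> t h1 h2; apply: (@nearI _ k) => //; slia.
have J1 : [set sigma 0; sigma (k * s).-1] \in JS by rewrite /JS wr setU11.
rewrite Fconnect_sym in P1.
apply: Fconnect_trans (QS_sub _ P1) _.
apply: Fconnect_trans (JS_in J1) _.
by rewrite Fconnect_sym; exact: QS_sub.
Qed.

Lemma Hcross x y : G x y -> f0 x != f0 y ->
  [set x; y] \in NearS /\ Fconnect ((NearS :&: EinS) :|: JS) x y.
Proof.
move=> Gxy; rewrite f0_eq => ne; rewrite -/QS.
have Gyx : G y x by rewrite Gsym.
have swap : [set y; x] \in NearS /\ Fconnect (QS :|: JS) y x ->
   [set x; y] \in NearS /\ Fconnect (QS :|: JS) x y.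
  by case=> h1 h2; rewrite set2C Fconnect_sym.
case: (Gclose Gxy) => [[c1 c2]|[wr [[w1 w2]|[w1 w2]]]].
- case: (ltngtP (tau x) (tau y)) => [lt|lt|eq].
  + exact: cross_close.
  + by apply: swap; apply: cross_close => //; rewrite eq_sym.
  + by move: ne; rewrite eq eqxx.
- exact: cross_wrap.
- by apply: swap; apply: cross_wrap.
Qed.

Lemma part_f0 (i : 'I_k) : part f0 i = [set sigma (i * s + d) | d : 'I_s].
Proof.
apply/setP => x; rewrite inE; apply/eqP/imsetP => [e|[d _ ->]].
  exists (Ordinal (ltn_pmod (tau x) s_gt0)) => //=.
  by rewrite -e f0E -divn_eq tauK.
apply: ord_inj; rewrite f0E sigmaK.
  by rewrite (@div_eqI _ i) ?leq_addr // ltn_add2l.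
have : i.+1 * s <= k * s by rewrite leq_mul2r ltn_ord orbT.
by rewrite mulSn; have := ltn_ord d; lia.
Qed.

Lemma card_part (i : 'I_k) : #|part f0 i| = s.
Proof.
rewrite part_f0 card_imset ?card_ord //.
move=> d1 d2 /(congr1 tau).
have lt : forall d : 'I_s, i * s + d < k * s.
  move=> d; have : i.+1 * s <= k * s by rewrite leq_mul2r ltn_ord orbT.
  by rewrite mulSn; have := ltn_ord d; lia.
by rewrite !sigmaK // => /eqP; rewrite eqn_add2l => /eqP /val_inj.
Qed.

Lemma f0kp : is_kpartition f0.
Proof.
apply/forallP => i; rewrite -card_gt0 card_part; exact: s_gt0.
Qed.

Lemma f0bal : is_balanced f0.
Proof. by apply/forallP => i; apply/forallP => j; rewrite !card_part. Qed.

Lemma V_card : #|V| <= k * s.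
Proof.
have inj : injective (fun x => Ordinal (tauN x)).
  by move=> x y /(congr1 val) /= e; rewrite -(tauK x) e tauK.
by have := leq_card _ inj; rewrite card_ord.
Qed.

Lemma NearV_card : #|NearV| <= k.+1 * (4 * m).
Proof.
rewrite -[k.+1](card_ord k.+1) -[4 * m](card_ord (4 * m)) -card_prod -cardsT.
apply: leq_trans (leq_imset_card (fun q : 'I_k.+1 * 'I_(4 * m) => sigma (q.1 * s + q.2 - 2 * m)) _).
apply/subset_leq_card/subsetP => x; rewrite inE => /existsP[i /andP[h1 h2]].
apply/imsetP.
have dlt : tau x + 2 * m - i * s < 4 * m by slia.
exists (i, Ordinal dlt) => //=.
by rewrite -{1}(tauK x); congr sigma; slia.
Qed.

Lemma NearS_card : #|NearS| <= 6 * (k.+1 * (4 * m)).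
Proof.
apply: leq_trans (leq_imset_card _ _) _.
by rewrite cardsX cardsT card_ord mulnC leq_mul2l NearV_card orbT.
Qed.

Lemma EinS_card : #|EinS| <= 6 * (k * s).
Proof.
apply: leq_trans (_ : #|(fun p : V * 'I_6 => [set p.1; nb p.1 p.2]) @: setT| <= _).
  apply/subset_leq_card/subsetP => e; case/Ein_ex => a [b [-> Gab _]].
  by case: (Gnb Gab) => d ->; apply/imsetP; exists (a, d).
apply: leq_trans (leq_imset_card _ _) _.
by rewrite cardsT card_prod card_ord mulnC leq_mul2l V_card orbT.
Qed.

Lemma Jg_card : #|Jg| <= k.-1.
Proof. by apply: leq_trans (leq_imset_card _ _) _; rewrite cardsT card_ord. Qed.

Lemma JS_card : #|JS| <= k - ~~ wrapok.
Proof.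
rewrite /JS; case: wrapok => /=.
  rewrite cardsU1 subn0 -(prednK k_gt0) -add1n; apply: leq_add; [by case: (_ \notin _) | exact: Jg_card].
by rewrite subn1 Jg_card.
Qed.

Theorem snake_bound :
  Z_tree G k <= 2 ^ #|NearS| * #|[set Z : {set {set V}} | (Z \subset EinS) && (#|Z| <= #|JS|)]|
     * k`! * Z_balanced G k /\ 0 < Z_balanced G k.
Proof.
exact: (abstract_bound Gsym f0kp Hreg Hcross f0bal).
Qed.

End Snake.

Lemma leq_expr a b e : a <= b -> a ^ e <= b ^ e.
Proof. by move=> ab; case: e => [|e] //; rewrite leq_exp2r. Qed.

Lemma ffact_le_exp n j : n ^_ j <= n ^ j.
Proof.
elim: j n => [|j IH] n //; rewrite ffactnS expnS leq_mul2l.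
apply/orP; right; apply: leq_trans (IH _) _.
by apply: leq_expr; rewrite leq_pred.
Qed.

Lemma fact_le j k : j <= k -> k`! <= j`! * k ^ (k - j).
Proof.
elim: k => [|k IH] jk; first by move: jk; rewrite leqn0 => /eqP ->.
case: (ltngtP j k.+1) => [lt|lt|->]; [|lia|by rewrite subnn expn0 muln1].
have := IH lt; rewrite factS => h.
rewrite subSn // expnS mulnCA leq_mul2l; apply/orP; right.
apply: leq_trans h _; rewrite leq_mul2l; apply/orP; right.
by apply: leq_expr; apply: leqnSn.
Qed.

Lemma term_bound E j K k : j <= K -> K <= k -> k <= E ->
  E ^ j * k ^ (k - j) <= E ^ K * k ^ (k - K).
Proof.
move=> jK Kk kE.
have -> : k - j = (K - j) + (k - K) by lia.
rewrite expnD mulnA leq_mul2r; apply/orP; right.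
have -> : K = j + (K - j) by lia.
rewrite addKn expnD leq_mul2l; apply/orP; right; exact: leq_expr.
Qed.

Lemma sum_bound E E' J K k : J <= K -> K <= k -> k <= E' -> E <= E' ->
  (\sum_(j < J.+1) 'C(E, j)) * k`! <= J.+1 * (E' ^ K * k ^ (k - K)).
Proof.
move=> JK Kk kE EE.
rewrite big_distrl /= -[X in _ <= X * _](card_ord J.+1) -sum_nat_const.
apply: leq_sum => j _.
have jK : j <= K by apply: leq_trans JK; rewrite -ltnS.
have jk : j <= k by apply: leq_trans Kk.
apply: leq_trans (term_bound jK Kk kE).
apply: leq_trans (_ : 'C(E', j) * k`! <= _); first by rewrite leq_mul2r leq_bin2l ?orbT.
apply: leq_trans (_ : 'C(E', j) * (j`! * k ^ (k - j)) <= _).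
  by rewrite leq_mul2l fact_le ?orbT.
by rewrite mulnA bin_ffact leq_mul2r ffact_le_exp orbT.
Qed.

Lemma Zcount (T : finType) (B : {set T}) J :
  #|[set Z : {set T} | (Z \subset B) && (#|Z| <= J)]| <= \sum_(j < J.+1) 'C(#|B|, j).
Proof.
rewrite (eq_bigr (fun j : 'I_J.+1 => #|[set Z : {set T} | Z \subset B & #|Z| == j]|)); last first.
  by move=> j _; rewrite cards_draws.
rewrite -sum1_card.
rewrite (eq_bigr (fun j : 'I_J.+1 => \sum_(Z : {set T}) ((Z \subset B) && (#|Z| == j) : nat))); last first.
  move=> j _; rewrite -sum1_card [LHS]big_mkcond /=; apply: eq_bigr => Z _; rewrite inE.
  by case: (_ && _).
rewrite exchange_big /= [X in X <= _]big_mkcond /=; apply: leq_sum => Z _.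
rewrite inE; case: (boolP ((Z \subset B) && (#|Z| <= J))) => // /andP[ZB ZJ].
have lt : #|Z| < J.+1 by [].
by rewrite (bigD1 (Ordinal lt)) //= ZB eqxx.
Qed.

Lemma kk_bound k : k.+1 * k <= 4 ^ k.
Proof.
elim: k => [|k IH] //.
case: k IH => [|k] IH //.
rewrite expnS; apply: leq_trans (_ : 4 * (k.+2 * k.+1) <= _); last by rewrite leq_mul2l IH.
nia.
Qed.

Ltac slia := repeat match goal with
  | H : context[divn _ _] |- _ => clear H
  | H : context[modn _ _] |- _ => clear H end; lia.

Section Grid.
Variables m n : nat.
Hypothesis m_gt0 : 0 < m.
Hypothesis n_gt0 : 0 < n.

Definition V := ('I_m * 'I_n)%type.
Definition rho (c r : nat) := if odd c then m.-1 - r else r.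
Definition tau (x : V) := x.2 * m + rho x.2 x.1.

Lemma rho_lt c r : r < m -> rho c r < m.
Proof. by rewrite /rho; case: odd => //; slia. Qed.

Lemma rho_inv c r : r < m -> rho c (rho c r) = r.
Proof. by rewrite /rho; case: odd => //; slia. Qed.

Definition rowj (j : nat) := rho (j %/ m) (j %% m).
Lemma rowj_lt j : rowj j < m.
Proof. by apply: rho_lt; rewrite ltn_pmod. Qed.

Definition sig (j : nat) : V := (Ordinal (rowj_lt j), Ordinal (ltn_pmod (j %/ m) n_gt0)).

Lemma sig_qr q r : r < m -> q < n -> (sig (q * m + r)).1 = rho q r :> nat /\ (sig (q * m + r)).2 = q :> nat.
Proof.
move=> rm qn; rewrite /sig /= /rowj.
have d : (q * m + r) %/ m = q by rewrite divnMDl // divn_small // addn0.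
have e : (q * m + r) %% m = r by rewrite modnMDl modn_small.
by rewrite d e modn_small.
Qed.

Lemma tauN x : tau x < m * n.
Proof.
rewrite /tau; have h1 := rho_lt x.2 (ltn_ord x.1); have h2 := ltn_ord x.2.
have : (x.2 : nat).+1 * m <= n * m by rewrite leq_mul2r h2 orbT.
rewrite mulSn; slia.
Qed.

Lemma tauK x : sig (tau x) = x.
Proof.
case: x => [r c]; have [e1 e2] := sig_qr (rho_lt c (ltn_ord r)) (ltn_ord c).
rewrite /tau /=; apply/eqP; rewrite xpair_eqE; apply/andP; split; apply/eqP; apply: ord_inj.
  by rewrite e1 rho_inv.
by rewrite e2.
Qed.

Lemma sigK j : j < m * n -> tau (sig j) = j.
Proof.
move=> jN; rewrite {2}(divn_eq j m).
have qn : j %/ m < n by rewrite ltn_divLR // mulnC.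
have rm : j %% m < m by rewrite ltn_pmod.
have [e1 e2] := sig_qr rm qn.
rewrite -(divn_eq j m) in e1 e2.
by rewrite /tau e1 e2 rho_inv.
Qed.
Lemma cart_sym (A B : finType) (G1 : rel A) (H1 : rel B) :
  symmetric G1 -> symmetric H1 -> symmetric (cart_adj G1 H1).
Proof.
move=> s1 s2 x y; rewrite /cart_adj (eq_sym x.1) (eq_sym x.2) s1 s2 //.
Qed.

Lemma path_sym p : symmetric (path_adj p).
Proof. by move=> i j; rewrite /path_adj orbC. Qed.

Lemma cycle_sym p : symmetric (cycle_adj p).
Proof. by move=> i j; rewrite /cycle_adj eq_sym orbC. Qed.

Lemma path_cases p (i j : 'I_p) : path_adj p i j -> i.+1 = j \/ j.+1 = i.
Proof. by case/orP => /eqP; auto. Qed.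

Lemma cycle_cases (i j : 'I_n) : cycle_adj n i j ->
  [\/ i.+1 = j, j.+1 = i, i.+1 = n /\ (j : nat) = 0 | j.+1 = n /\ (i : nat) = 0].
Proof.
case/andP=> _ /orP[/eqP h|/eqP h].
- have := ltn_ord i; rewrite leq_eqVlt => /orP[/eqP e|lt].
    by move: h; rewrite e modnn => h; constructor 3.
  by move: h; rewrite modn_small // => h; constructor 1.
- have := ltn_ord j; rewrite leq_eqVlt => /orP[/eqP e|lt].
    by move: h; rewrite e modnn => h; constructor 4.
  by move: h; rewrite modn_small // => h; constructor 2.
Qed.

Lemma path_cycle (i j : 'I_n) : path_adj n i j -> cycle_adj n i j.
Proof.
case/orP=> /eqP e; rewrite /cycle_adj -val_eqE /=; apply/andP; split.
- by apply/eqP; slia.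
- by apply/orP; left; rewrite e modn_small.
- by apply/eqP; slia.
- by apply/orP; right; rewrite e modn_small.
Qed.

Lemma Gsnake_gen (H : rel 'I_n) :
  (forall c c' : 'I_n, c.+1 = c' -> H c c') ->
  forall j, j.+1 < m * n -> cart_adj (path_adj m) H (sig j) (sig j.+1).
Proof.
move=> Hs j jN.
have rm : j %% m < m by rewrite ltn_pmod.
have qn : j %/ m < n by rewrite ltn_divLR // mulnC; apply: ltnW.
have jE := divn_eq j m; move: (j %/ m) (j %% m) rm qn jE => q r rm qn jE; subst j.
rewrite /cart_adj.
case: (ltngtP r.+1 m) => [lt|lt|e]; [ | by move: lt; rewrite ltnNge rm | ]; last first.
- have E : (q * m + r).+1 = q.+1 * m by rewrite -addnS e mulSn addnC.
  have q1n : q.+1 < n by move: jN; rewrite E mulnC ltn_pmul2l.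
  rewrite E -[q.+1 * m]addn0.
  have [a1 a2] := sig_qr rm qn; have [b1 b2] := sig_qr m_gt0 q1n.
  apply/orP; left; apply/andP; split.
    have rm1 : r = m.-1 by rewrite -e.
    apply/eqP; apply: ord_inj; rewrite a1 b1 /rho /= rm1; case: (odd q) => /=; by rewrite ?subnn ?subn0.
  by apply: Hs; rewrite a2 b2.
have -> : (q * m + r).+1 = q * m + r.+1 by rewrite addnS.
have [a1 a2] := sig_qr rm qn; have [b1 b2] := sig_qr lt qn.
apply/orP; right; apply/andP; split; first by apply/eqP; apply: ord_inj; rewrite a2 b2.
rewrite /path_adj a1 b1 /rho; case: (odd q); apply/orP; [right|left]; apply/eqP => //.
rewrite -subSn; first by rewrite subSS.
by rewrite -ltnS prednK.
Qed.

Definition closeP (x y : V) := tau x < tau y + 2 * m /\ tau y < tau x + 2 * m.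

Lemma close_vert (x y : V) : x.2 = y.2 -> (x.1.+1 = y.1 \/ y.1.+1 = x.1) -> closeP x y.
Proof.
case: x y => [r c] [r' c'] /= e h; subst c'.
have := ltn_ord r; have := ltn_ord r'; rewrite /closeP /tau /= /rho.
by case: (odd c) => /=; slia.
Qed.

Lemma close_horiz (x y : V) : x.1 = y.1 -> x.2.+1 = y.2 -> closeP x y.
Proof.
case: x y => [r c] [r' c'] /= e h; subst r'.
have := rho_lt c (ltn_ord r); have := rho_lt c' (ltn_ord r).
rewrite /closeP /tau /= -h mulSn; slia.
Qed.

Lemma closeC x y : closeP x y -> closeP y x.
Proof. by case. Qed.

Lemma Gclose_grid (x y : V) : grid_graph m n x y -> closeP x y.
Proof.
case/orP => /andP[/eqP e h].
- case: (path_cases h) => h'; first exact: close_horiz.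
  by apply: closeC; apply: close_horiz.
- by apply: close_vert => //; apply: path_cases.
Qed.

Lemma Gclose_cyl (x y : V) : cyl_graph m n x y ->
  closeP x y \/ ((tau x < m /\ m * n - m <= tau y) \/ (tau y < m /\ m * n - m <= tau x)).
Proof.
case/orP => /andP[/eqP e h].
- case: (cycle_cases h) => [h'|h'|[h1 h2]|[h1 h2]].
  + by left; apply: close_horiz.
  + by left; apply: closeC; apply: close_horiz.
  + right; right.
    have := rho_lt y.2 (ltn_ord y.1); have := rho_lt x.2 (ltn_ord x.1).
    rewrite /tau h2 mul0n add0n.
    have : (x.2 : nat) * m + m = n * m by rewrite addnC -mulSn h1.
    slia.
  + right; left.
    have := rho_lt y.2 (ltn_ord y.1); have := rho_lt x.2 (ltn_ord x.1).
    rewrite /tau h2 mul0n add0n.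
    have : (y.2 : nat) * m + m = n * m by rewrite addnC -mulSn h1.
    slia.
- by left; apply: close_vert => //; apply: path_cases.
Qed.

Definition ordm (i : nat) : 'I_m := Ordinal (ltn_pmod i m_gt0).
Definition ordn (i : nat) : 'I_n := Ordinal (ltn_pmod i n_gt0).

Definition nb (x : V) (d : 'I_6) : V :=
  match val d with
  | 0 => (ordm x.1.+1, x.2)
  | 1 => (ordm x.1.-1, x.2)
  | 2 => (x.1, ordn x.2.+1)
  | 3 => (x.1, ordn x.2.-1)
  | 4 => (x.1, ordn 0)
  | _ => (x.1, ordn n.-1)
  end.

Lemma Gnb_cyl (x y : V) : cyl_graph m n x y -> exists d, y = nb x d.
Proof.
case: x y => [r c] [r' c']; case/orP => /andP[/eqP /= e h].
- subst r'; case: (cycle_cases h) => [h'|h'|[h1 h2]|[h1 h2]].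
  + exists (Ordinal (isT : 2 < 6)); rewrite /nb /=; congr pair; apply: ord_inj => /=.
    by rewrite h' modn_small.
  + exists (Ordinal (isT : 3 < 6)); rewrite /nb /=; congr pair; apply: ord_inj => /=.
    by rewrite -h' /= modn_small // ltnW.
  + exists (Ordinal (isT : 2 < 6)); rewrite /nb /=; congr pair; apply: ord_inj => /=.
    by rewrite h1 modnn h2.
  + exists (Ordinal (isT : 5 < 6)); rewrite /nb /=; congr pair; apply: ord_inj => /=.
    by rewrite modn_small; slia.
- subst c'; case: (path_cases h) => h'.
  + exists (Ordinal (isT : 0 < 6)); rewrite /nb /=; congr pair; apply: ord_inj => /=.
    by rewrite h' modn_small.
  + exists (Ordinal (isT : 1 < 6)); rewrite /nb /=; congr pair; apply: ord_inj => /=.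
    by rewrite -h' /= modn_small // ltnW.
Qed.

Lemma grid_cyl (x y : V) : grid_graph m n x y -> cyl_graph m n x y.
Proof.
case/orP => /andP[e h]; apply/orP; [left|right]; rewrite e //=.
exact: path_cycle.
Qed.

End Grid.

Definition Cn (m : nat) := 2 ^ (48 * m) * (24 * m).

Lemma numbound m n k Nr J K : 0 < m -> 0 < k -> Nr <= 6 * (k.+1 * (4 * m)) ->
  J.+1 * k ^ (k - K) <= k.+1 * k -> K <= k ->
  2 ^ Nr * (J.+1 * ((6 * (m * n)) ^ K * k ^ (k - K))) <= n ^ K * Cn m ^ k.
Proof.
move=> m0 k0 hN hJ Kk.
have mk : m <= m * k by rewrite leq_pmulr.
have e1 : 2 ^ Nr <= 2 ^ (48 * m * k) by apply: leq_pexp2l => //; lia.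
have e2 : (6 * (m * n)) ^ K = (6 * m) ^ K * n ^ K by rewrite mulnA expnMn.
have e3 : (6 * m) ^ K <= (6 * m) ^ k by apply: leq_pexp2l => //; lia.
have e4 := kk_bound k.
have -> : Cn m ^ k = 2 ^ (48 * m * k) * 4 ^ k * (6 * m) ^ k.
  by rewrite /Cn expnMn -expnM (_ : 24 * m = 4 * (6 * m)) ?mulnA ?expnMn //; lia.
rewrite e2.
have -> : J.+1 * ((6 * m) ^ K * n ^ K * k ^ (k - K)) = (J.+1 * k ^ (k - K)) * (6 * m) ^ K * n ^ K.
  by ring.
have -> : n ^ K * (2 ^ (48 * m * k) * 4 ^ k * (6 * m) ^ k) =
  (2 ^ (48 * m * k) * 4 ^ k * (6 * m) ^ k) * n ^ K by ring.
rewrite !mulnA leq_mul2r; apply/orP; right.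
apply: leq_mul; last exact: e3.
rewrite -mulnA; apply: leq_mul; first exact: e1.
exact: leq_trans hJ e4.
Qed.

Lemma Zb_le_Zt (V : finType) (H : rel V) k : Z_balanced H k <= Z_tree H k.
Proof.
rewrite /Z_balanced /Z_tree [X in X <= _]big_mkcond [X in _ <= X]big_mkcond /=.
by apply: leq_sum => f _; case: (is_kpartition f); case: (is_balanced f).
Qed.

Lemma rat_concl Zt Zb M B : (Zt <= M * Zb)%N -> (0 < Zb)%N -> (Zb <= Zt)%N -> (M <= B)%N -> (0 < B)%N ->
  ((1 / B%:R : rat) <= Zb%:R / Zt%:R)%R.
Proof.
move=> h1 h2 h3 h4 h5.
have Zt0 : (0 < Zt)%N by apply: leq_trans h3.
rewrite ler_pdivlMr ?ltr0n // mul1r mulrC ler_pdivrMr ?ltr0n //.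
rewrite -natrM ler_nat mulnC; apply: leq_trans h1 _.
by rewrite leq_mul2r h4 orbT.
Qed.

Lemma combine Zt Zb Nr Zs E J K k m n :
  Zt <= 2 ^ Nr * Zs * k`! * Zb -> Zs <= \sum_(j < J.+1) 'C(E, j) -> E <= 6 * (m * n) ->
  J <= K -> K <= k -> k <= 6 * (m * n) -> Nr <= 6 * (k.+1 * (4 * m)) ->
  J.+1 * k ^ (k - K) <= k.+1 * k -> 0 < m -> 0 < k ->
  Zt <= n ^ K * Cn m ^ k * Zb.
Proof.
move=> h1 h2 hE JK Kk kE hN hJ m0 k0.
apply: leq_trans h1 _; rewrite leq_mul2r; apply/orP; right.
apply: leq_trans (numbound n m0 k0 hN hJ Kk).
rewrite -mulnA leq_mul2l; apply/orP; right.
apply: leq_trans (sum_bound JK Kk kE hE).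
by rewrite leq_mul2r h2 orbT.
Qed.

Section Inst.
Variables m n k : nat.
Hypothesis m0 : 0 < m.
Hypothesis k0 : 0 < k.
Hypothesis kn : 4 * k <= n.
Hypothesis dv : k %| m * n.

Lemma n0 : 0 < n. Proof. lia. Qed.
Definition s := m * n %/ k.
Lemma ks : k * s = m * n. Proof. by rewrite /s mulnC divnK. Qed.
Lemma s_ge : 4 * m <= s.
Proof.
rewrite -(leq_pmul2l k0) ks.
have -> : k * (4 * m) = m * (4 * k) by ring.
by rewrite leq_mul2l kn orbT.
Qed.

Lemma tauN' (x : V m n) : tau x < k * s. Proof. by rewrite ks (tauN m0 n0). Qed.
Lemma sigK' j : j < k * s -> tau (sig m0 n0 j) = j.
Proof. by rewrite ks; apply: (sigK m0 n0). Qed.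

Lemma kE : k <= 6 * (m * n).
Proof.
have : n <= m * n by rewrite leq_pmull.
lia.
Qed.

Lemma grid_main :
  Z_tree (grid_graph m n) k <= n ^ k.-1 * Cn m ^ k * Z_balanced (grid_graph m n) k /\
  0 < Z_balanced (grid_graph m n) k.
Proof.
have Gsym := cart_sym (@path_sym m) (@path_sym n).
have Gsn : forall j, j.+1 < k * s -> grid_graph m n (sig m0 n0 j) (sig m0 n0 j.+1).
  move=> j; rewrite ks; apply: Gsnake_gen => c c' e.
  by apply/orP; left; apply/eqP.
have Gcl : forall x y : V m n, grid_graph m n x y ->
   (tau x < tau y + 2 * m /\ tau y < tau x + 2 * m) \/
   (false /\ ((tau x < m /\ k * s - m <= tau y) \/ (tau y < m /\ k * s - m <= tau x))).
  by move=> x y h; left; exact: (Gclose_grid m0 n0 h).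
have Gnb : forall x y : V m n, grid_graph m n x y -> exists d, y = nb m0 n0 x d.
  by move=> x y h; apply: (Gnb_cyl m0 n0); apply: (grid_cyl m0 n0).
have [h1 h2] := snake_bound Gsym m0 k0 s_ge tauN' (tauK m0 n0) sigK' Gsn Gcl Gnb.
split=> //.
apply: combine h1 (Zcount _ _) _ _ _ kE _ _ m0 k0.
- by rewrite -ks; apply: (EinS_card k0 tauN' (tauK m0 n0) Gnb).
- by have := JS_card s k0 (sig m0 n0) false; rewrite /= subn1.
- exact: leq_pred.
- exact: (NearS_card m0 k0 s_ge (tauK m0 n0)).
- have := JS_card s k0 (sig m0 n0) false; rewrite /= subn1 => hJ.
  have -> : k - k.-1 = 1 by lia.
  rewrite expn1 leq_mul2r; apply/orP; right; lia.
Qed.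

Lemma cyl_main :
  Z_tree (cyl_graph m n) k <= n ^ k * Cn m ^ k * Z_balanced (cyl_graph m n) k /\
  0 < Z_balanced (cyl_graph m n) k.
Proof.
have Gsym := cart_sym (@path_sym m) (@cycle_sym n).
have Gsn : forall j, j.+1 < k * s -> cyl_graph m n (sig m0 n0 j) (sig m0 n0 j.+1).
  move=> j; rewrite ks; apply: Gsnake_gen => c c' e.
  by apply: (path_cycle m0 n0); apply/orP; left; apply/eqP.
have Gcl : forall x y : V m n, cyl_graph m n x y ->
   (tau x < tau y + 2 * m /\ tau y < tau x + 2 * m) \/
   (true /\ ((tau x < m /\ k * s - m <= tau y) \/ (tau y < m /\ k * s - m <= tau x))).
  move=> x y h; rewrite ks; case: (Gclose_cyl m0 n0 h) => [c|w]; first by left.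
  by right; split.
have Gnb : forall x y : V m n, cyl_graph m n x y -> exists d, y = nb m0 n0 x d.
  by move=> x y h; apply: (Gnb_cyl m0 n0).
have [h1 h2] := snake_bound Gsym m0 k0 s_ge tauN' (tauK m0 n0) sigK' Gsn Gcl Gnb.
split=> //.
apply: combine h1 (Zcount _ _) _ _ _ kE _ _ m0 k0.
- by rewrite -ks; apply: (EinS_card k0 tauN' (tauK m0 n0) Gnb).
- by have := JS_card s k0 (sig m0 n0) true; rewrite /= subn0.
- exact: leqnn.
- exact: (NearS_card m0 k0 s_ge (tauK m0 n0)).
- have := JS_card s k0 (sig m0 n0) true; rewrite /= subn0 subnn expn0 muln1 => hJ.
  have : k.+1 <= k.+1 * k by rewrite leq_pmulr.
  lia.
Qed.

End Inst.

Local Open Scope ring_scope.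

Theorem theorem5p2 :
  forall m : nat, (0 < m)%N ->
  exists c C : rat, 0 < c /\ 0 < C /\
    forall k : nat, (0 < k)%N ->
    exists N : nat, forall n : nat, (N <= n)%N -> (k %| m * n)%N ->
      c / ((n%:R) ^+ (k.-1) * C ^+ k) <= balanced_fraction (grid_graph m n) k /\
      c / ((n%:R) ^+ k * C ^+ k) <= balanced_fraction (cyl_graph m n) k.
Proof.
move=> m m0.
have C0 : (0 < Cn m)%N by rewrite /Cn muln_gt0 expn_gt0 /= muln_gt0 m0.
exists 1, (Cn m)%:R; split; first exact: ltr01.
split; first by rewrite ltr0n.
move=> k k0; exists (4 * k)%N => n kn dv.
have n0 : (0 < n)%N by apply: leq_trans kn; rewrite muln_gt0 k0.
rewrite /balanced_fraction; split.
- have [h1 h2] := grid_main m0 k0 kn dv.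
  rewrite -!natrX -natrM.
  apply: rat_concl h1 h2 (Zb_le_Zt _ _) (leqnn _) _.
  by rewrite muln_gt0 expn_gt0 n0 expn_gt0 C0.
- have [h1 h2] := cyl_main m0 k0 kn dv.
  rewrite -!natrX -natrM.
  apply: rat_concl h1 h2 (Zb_le_Zt _ _) (leqnn _) _.
  by rewrite muln_gt0 expn_gt0 n0 expn_gt0 C0.
Qed.
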